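(* Let $0<e_0\le 1$ be a constant. If an algorithm is an $\alpha$-approximation algorithm for the classical problem $P_m\mid\mid C_{\max}$, then using the schedule it produces (the same assignment of jobs to machines and the same order of jobs on each machine, processed without unnecessary idle time) yields an $\tfrac{\alpha}{e_0}$-approximation algorithm for $P_m, e_{i,k}\ge e_0\mid\mid C_{\max}$.
   Context: Shared-processing parallel machine scheduling: there are $m$ identical machines $M_1,\dots,M_m$ and $n$ primary jobs, all available at time $0$, job $j$ having processing time $p_j>0$. Each job is processed by exactly one machine without interruption; each machine processes its jobs one after another. The time axis of machine $M_i$ is partitioned into consecutive intervals $(0,t_{i,1}],(t_{i,1},t_{i,2}],\dots$ with sharing ratios $e_{i,k}\in(0,1]$; during the $k$-th interval $M_i$ processes primary work at rate $e_{i,k}$ (so a job of length $p$ started at time $s$ completes at the earliest $C$ with $\int_s^C(\text{rate of }M_i)\,dt=p$). The makespan is $C_{\max}=\max_j C_j$. $P_m, e_{i,k}\ge e_0\mid\mid C_{\max}$ denotes makespan minimization when all sharing ratios on all machines satisfy $e_{i,k}\ge e_0$. $P_m\mid\mid C_{\max}$ is the classical problem where all ratios equal $1$. *)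

(* Defs.v *)
From Stdlib Require Import Reals List Permutation.
From Coquelicot Require Import Coquelicot.
Open Scope R_scope.

Definition sharing_profile (e0 : R) (rate : R -> R) : Prop :=
  exists (t e : nat -> R),
    t O = 0 /\
    (forall k, t k < t (S k)) /\
    (forall M, exists k, M < t k) /\
    (forall k, 0 < e k <= 1 /\ e0 <= e k) /\
    (forall k x, t k < x <= t (S k) -> rate x = e k).

Definition classical_rate : R -> R := fun _ => 1.

Definition completes (rate : R -> R) (s p C : R) : Prop :=
  s <= C /\ RInt rate s C = p /\
  (forall C', s <= C' -> RInt rate s C' = p -> C <= C').

Fixpoint chain (noidle : bool) (rate : R -> R) (p S C : nat -> R)
    (prev : R) (l : list nat) : Prop :=
  match l with
  | nil => True
  | j :: l' =>
      (if noidle then S j = prev else prev <= S j) /\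
      completes rate (S j) (p j) (C j) /\
      chain noidle rate p S C (C j) l'
  end.

Definition assignment (m n : nat) (asg : list (list nat)) : Prop :=
  length asg = m /\ Permutation (concat asg) (seq 0 n).

Definition schedule (noidle : bool) (m n : nat) (p : nat -> R)
    (rates : nat -> R -> R) (asg : list (list nat)) (S C : nat -> R) : Prop :=
  assignment m n asg /\
  forall i, (i < m)%nat -> chain noidle (rates i) p S C 0 (nth i asg nil).

Definition makespan (n : nat) (C : nat -> R) : R :=
  fold_right Rmax 0 (map C (seq 0 n)).

(* Main.v *)
Require Import Defs.
From Stdlib Require Import Reals List Permutation Lra Lia.
From Coquelicot Require Import Coquelicot.
Open Scope R_scope.

Definition good (r : R -> R) (lo : R) := forall a b, 0 <= a <= b ->
  ex_RInt r a b /\ lo * (b - a) <= RInt r a b <= b - a.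

Lemma sharing_good e0 r : sharing_profile e0 r -> good r e0.
Proof.
  intros [t [e [Ht0 [Hinc [Hunb [He Hr]]]]]].
  set (P := fun a b => ex_RInt r a b /\ e0 * (b - a) <= RInt r a b <= b - a).
  assert (Hmono : forall k N, t k <= t (k + N)%nat).
  { intros k N; induction N. rewrite Nat.add_0_r; lra.
    replace (k + S N)%nat with (S (k+N)) by lia. specialize (Hinc (k+N)%nat). lra. }
  assert (Hpiece : forall k a b, t k <= a <= b -> b <= t (S k) -> P a b).
  { intros k a b Hab Hb.
    assert (H : is_RInt r a b ((b - a) * e k)).
    { apply is_RInt_ext with (fun _ => e k).
      - intros x Hx. rewrite Rmin_left in Hx by lra. rewrite Rmax_right in Hx by lra.
        symmetry; apply Hr; lra.
      - exact (is_RInt_const a b (e k)). }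
    destruct (He k) as [[He1 He2] He3].
    split. eexists; exact H.
    rewrite (is_RInt_unique _ _ _ _ H). split; nra. }
  assert (Hcomb : forall a b c, P a b -> P b c -> P a c).
  { intros a b c [H1 H2] [H3 H4]. split. eapply ex_RInt_Chasles; eauto.
    rewrite <- (RInt_Chasles r a b c H1 H3). unfold plus; simpl. lra. }
  assert (HQ : forall N k a b, t k <= a <= b -> b <= t (k + N)%nat -> P a b).
  { induction N; intros k a b Hab Hb.
    - rewrite Nat.add_0_r in Hb. apply (Hpiece k); try lra. specialize (Hinc k); lra.
    - replace (k + S N)%nat with (S k + N)%nat in Hb by lia.
      destruct (Rle_dec b (t (S k))) as [Hb1|Hb1].
      + apply (Hpiece k); lra.
      + destruct (Rle_dec (t (S k)) a) as [Ha1|Ha1].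
        * apply (IHN (S k)); lra.
        * apply Hcomb with (t (S k)).
          -- apply (Hpiece k); lra.
          -- apply (IHN (S k)); lra. }
  intros a b Hab. destruct (Hunb b) as [K HK].
  apply (HQ K 0%nat a b). rewrite Ht0; lra. simpl; lra.
Qed.

Lemma classical_good : good classical_rate 1.
Proof.
  intros a b Hab. unfold classical_rate. split. apply ex_RInt_const.
  rewrite RInt_const. unfold scal; simpl; unfold mult; simpl. lra.
Qed.
Definition sumL (p : nat -> R) (l : list nat) := fold_right (fun j acc => p j + acc) 0 l.

Lemma sumL_nonneg p l : (forall j, In j l -> 0 <= p j) -> 0 <= sumL p l.
Proof. induction l; simpl; intros H. lra. assert (0 <= p a) by auto. assert (0 <= sumL p l) by auto. lra. Qed.

Lemma sumL_ge p l j : (forall j, In j l -> 0 <= p j) -> In j l -> p j <= sumL p l.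
Proof. induction l; simpl; intros H Hj. contradiction.
  destruct Hj as [<-|Hj]. assert (0 <= sumL p l) by (apply sumL_nonneg; auto). lra.
  assert (0 <= p a) by auto. assert (p j <= sumL p l) by auto. lra. Qed.

Lemma chain_upper r lo p S C l : good r lo -> 0 < lo ->
  (forall j, In j l -> 0 <= p j) ->
  forall prev, 0 <= prev -> chain true r p S C prev l ->
  forall j, In j l -> lo * (C j - prev) <= sumL p l.
Proof.
  intros Hg Hlo. induction l as [|j0 l IH]; simpl; intros Hp prev Hprev Hc j Hj. contradiction.
  destruct Hc as [HS [[H1 [H2 H3]] Hc]]. subst prev.
  destruct (Hg (S j0) (C j0)) as [_ [Hb _]]; [lra|]. rewrite H2 in Hb.
  assert (0 <= sumL p l) by (apply sumL_nonneg; auto).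
  destruct Hj as [<-|Hj]. lra.
  assert (lo * (C j - C j0) <= sumL p l) by (apply (IH (fun x h => Hp x (or_intror h)) (C j0)); auto; lra).
  lra.
Qed.

Fixpoint lastC (C : nat -> R) (prev : R) (l : list nat) : R :=
  match l with nil => prev | j :: l' => lastC C (C j) l' end.

Lemma chain_lower b r lo p S C l : good r lo ->
  forall prev, 0 <= prev -> chain b r p S C prev l ->
  prev + sumL p l <= lastC C prev l.
Proof.
  intros Hg. induction l as [|j0 l IH]; simpl; intros prev Hprev Hc. lra.
  destruct Hc as [HS [[H1 [H2 H3]] Hc]].
  assert (prev <= S j0) by (destruct b; subst; lra).
  destruct (Hg (S j0) (C j0)) as [_ [_ Hb]]; [lra|]. rewrite H2 in Hb.
  assert (C j0 + sumL p l <= lastC C (C j0) l) by (apply IH; auto; lra). lra.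
Qed.

Lemma lastC_cases C prev l : lastC C prev l = prev \/ exists j, In j l /\ lastC C prev l = C j.
Proof.
  revert prev; induction l as [|j l IH]; simpl; intros prev. auto.
  destruct (IH (C j)) as [->|[j' [H1 H2]]]. right; exists j; auto. right; exists j'; auto.
Qed.

Lemma fold_max_ge0 l : 0 <= fold_right Rmax 0 l.
Proof. induction l; simpl. lra. eapply Rle_trans; [exact IHl|apply Rmax_r]. Qed.

Lemma fold_max_ge l x : In x l -> x <= fold_right Rmax 0 l.
Proof. induction l; simpl; intros H. contradiction. destruct H as [<-|H]. apply Rmax_l.
  eapply Rle_trans; [apply IHl; auto|apply Rmax_r]. Qed.

Lemma fold_max_le l B : 0 <= B -> (forall x, In x l -> x <= B) -> fold_right Rmax 0 l <= B.
Proof. induction l; simpl; intros H0 H. auto. apply Rmax_lub; auto. Qed.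

Lemma mk_ge0 n C : 0 <= makespan n C.
Proof. apply fold_max_ge0. Qed.

Lemma mk_ge n C j : (j < n)%nat -> C j <= makespan n C.
Proof. intros. apply fold_max_ge. apply in_map. apply in_seq. lia. Qed.

Lemma mk_le n C B : 0 <= B -> (forall j, (j < n)%nat -> C j <= B) -> makespan n C <= B.
Proof. intros H0 H. apply fold_max_le; auto. intros x Hx. apply in_map_iff in Hx.
  destruct Hx as [j [<- Hj]]. apply in_seq in Hj. apply H; lia. Qed.

Lemma chain_true_false r p S C prev l : chain true r p S C prev l -> chain false r p S C prev l.
Proof. revert prev; induction l; simpl; auto. intros prev [H1 [H2 H3]]. split; [rewrite H1; lra|split; auto]. Qed.

Lemma chain_ext b r p S C S' C' prev l :
  (forall x, In x l -> S x = S' x /\ C x = C' x) ->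
  chain b r p S C prev l -> chain b r p S' C' prev l.
Proof.
  revert prev; induction l as [|j l IH]; simpl; auto. intros prev H [H1 [H2 H3]].
  destruct (H j (or_introl eq_refl)) as [E1 E2]. rewrite <- E1, <- E2. split; auto.
Qed.
Definition upd (f : nat -> R) (j : nat) (v : R) : nat -> R :=
  fun x => if Nat.eq_dec x j then v else f x.
Arguments upd : simpl never.

Lemma nodup_disj (l r : list nat) x : NoDup (l ++ r) -> In x r -> ~ In x l.
Proof.
  intros Hnd Hx. destruct (in_split _ _ Hx) as [r1 [r2 ->]].
  rewrite app_assoc in Hnd. apply NoDup_remove_2 in Hnd.
  intros h; apply Hnd; apply in_or_app; left; apply in_or_app; auto.
Qed.

Fixpoint build (p : nat -> R) (l : list nat) (prev : R) (S C : nat -> R) : (nat -> R) * (nat -> R) :=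
  match l with
  | nil => (S, C)
  | j :: l' => build p l' (prev + p j) (upd S j prev) (upd C j (prev + p j))
  end.

Lemma completes_classical s q : 0 <= q -> completes classical_rate s q (s + q).
Proof.
  intros Hq. unfold completes, classical_rate. rewrite !RInt_const.
  unfold scal; simpl; unfold mult; simpl. split. lra. split. lra.
  intros C' _ H. rewrite RInt_const in H. unfold scal in H; simpl in H; unfold mult in H; simpl in H. lra.
Qed.

Lemma build_spec p l : NoDup l -> (forall j, In j l -> 0 <= p j) ->
  forall prev S C, 0 <= prev ->
  (forall x, ~ In x l -> fst (build p l prev S C) x = S x /\ snd (build p l prev S C) x = C x) /\
  chain true classical_rate p (fst (build p l prev S C)) (snd (build p l prev S C)) prev l.
Proof.
  induction l as [|j l IH]; simpl; intros Hnd Hp prev S C Hprev. split; auto.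
  inversion Hnd as [|? ? Hj Hnd']; subst.
  assert (0 <= p j) by auto.
  destruct (IH Hnd' (fun x h => Hp x (or_intror h)) (prev + p j) (upd S j prev) (upd C j (prev + p j))) as [Hf Hc]; [lra|].
  destruct (Hf j Hj) as [E1 E2]. assert (U1: forall f v, upd f j v j = v) by (intros; unfold upd; destruct (Nat.eq_dec j j); congruence). rewrite !U1 in E1, E2.
  split.
  - intros x Hx. destruct (Hf x) as [F1 F2]. intros Hx'; apply Hx; auto.
    rewrite F1, F2. unfold upd. destruct (Nat.eq_dec x j). exfalso; apply Hx; auto. auto.
  - rewrite E1, E2. split; auto. split. apply completes_classical; auto. exact Hc.
Qed.

Fixpoint buildAll (p : nat -> R) (asg : list (list nat)) (S C : nat -> R) : (nat -> R) * (nat -> R) :=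
  match asg with
  | nil => (S, C)
  | l :: rest => let SC := buildAll p rest S C in build p l 0 (fst SC) (snd SC)
  end.

Lemma buildAll_spec p asg : NoDup (concat asg) -> (forall j, In j (concat asg) -> 0 <= p j) ->
  forall S C,
  (forall x, ~ In x (concat asg) -> fst (buildAll p asg S C) x = S x /\ snd (buildAll p asg S C) x = C x) /\
  forall i, (i < length asg)%nat ->
  chain true classical_rate p (fst (buildAll p asg S C)) (snd (buildAll p asg S C)) 0 (nth i asg nil).
Proof.
  induction asg as [|l rest IH]; simpl; intros Hnd Hp S C.
  - split; auto. intros; lia.
  - destruct (IH (NoDup_app_remove_l _ _ Hnd) (fun x h => Hp x (in_or_app _ _ _ (or_intror h))) S C) as [Hf Hc].
    set (S1 := fst (buildAll p rest S C)). set (C1 := snd (buildAll p rest S C)).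
    fold S1 C1 in Hf, Hc.
    destruct (build_spec p l (NoDup_app_remove_r _ _ Hnd) (fun x h => Hp x (in_or_app _ _ _ (or_introl h))) 0 S1 C1 (Rle_refl 0)) as [Gf Gc].
    split.
    + intros x Hx. destruct (Gf x) as [G1 G2]. intros h; apply Hx; apply in_or_app; auto.
      destruct (Hf x) as [F1 F2]. intros h; apply Hx; apply in_or_app; auto.
      rewrite G1, G2, F1, F2; auto.
    + intros [|i] Hi. exact Gc.
      apply chain_ext with S1 C1. 
      * intros x Hx. assert (~ In x l).
        { apply (nodup_disj l (concat rest)); auto. apply in_concat. exists (nth i rest nil).
          split; auto. apply nth_In. lia. }
        destruct (Gf x H); split; symmetry; auto.
      * apply Hc. lia.
Qed.
Section Main.
Variables (m n : nat) (p : nat -> R).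

Lemma asg_nodup asg : assignment m n asg -> NoDup (concat asg).
Proof. intros [_ H]. eapply Permutation_NoDup. apply Permutation_sym; exact H. apply seq_NoDup. Qed.

Lemma asg_in asg j : assignment m n asg -> In j (concat asg) -> (j < n)%nat.
Proof. intros [_ H] Hj. eapply Permutation_in in Hj; [|exact H]. apply in_seq in Hj. lia. Qed.

Lemma asg_in_nth (asg : list (list nat)) i (j : nat) : In j (nth i asg nil) -> (i < length asg)%nat -> In j (concat asg).
Proof. intros Hj Hi. apply in_concat. exists (nth i asg nil). split; auto. apply nth_In; auto. Qed.

Lemma asg_find asg j : assignment m n asg -> (j < n)%nat -> exists i, (i < m)%nat /\ In j (nth i asg nil).
Proof.
  intros [Hl H] Hj. assert (In j (concat asg)).
  { eapply Permutation_in. apply Permutation_sym; exact H. apply in_seq; lia. }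
  apply in_concat in H0. destruct H0 as [x [Hx Hjx]]. destruct (In_nth _ _ nil Hx) as [i [Hi E]].
  exists i. split. lia. rewrite E; auto.
Qed.

Hypothesis Hp : forall j, (j < n)%nat -> 0 < p j.

Lemma classical_exists asg : assignment m n asg ->
  exists S C, schedule true m n p (fun _ => classical_rate) asg S C.
Proof.
  intros Ha. destruct (buildAll_spec p asg (asg_nodup asg Ha)
    (fun j h => Rlt_le _ _ (Hp j (asg_in asg j Ha h))) (fun _ => 0) (fun _ => 0)) as [_ Hc].
  exists (fst (buildAll p asg (fun _ => 0) (fun _ => 0))), (snd (buildAll p asg (fun _ => 0) (fun _ => 0))).
  split; auto. intros i Hi. apply Hc. destruct Ha; lia.
Qed.

Lemma upper_mk rates lo asg S C B : (forall i, (i < m)%nat -> good (rates i) lo) -> 0 < lo ->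
  schedule true m n p rates asg S C -> 0 <= B ->
  (forall i, (i < m)%nat -> sumL p (nth i asg nil) <= B) -> lo * makespan n C <= B.
Proof.
  intros Hg Hlo [Ha Hc] HB HL.
  assert (makespan n C <= B / lo).
  { apply mk_le. apply Rdiv_le_0_compat; lra. intros j Hj.
    destruct (asg_find asg j Ha Hj) as [i [Hi Hji]].
    assert (lo * (C j - 0) <= sumL p (nth i asg nil)).
    { apply (chain_upper (rates i) lo p S C (nth i asg nil) (Hg i Hi) Hlo).
      - intros x hx. apply Rlt_le, Hp. apply (asg_in asg x Ha).
        apply (asg_in_nth asg i x hx). destruct Ha; lia.
      - lra.
      - apply Hc; auto.
      - auto. }
    specialize (HL i Hi). apply Rmult_le_reg_l with lo; auto. field_simplify; lra. }
  apply Rmult_le_compat_l with (r := lo) in H; [|lra]. field_simplify in H; lra.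
Qed.

Lemma lower_mk b rates lo asg S C : (forall i, (i < m)%nat -> good (rates i) lo) ->
  schedule b m n p rates asg S C ->
  forall i, (i < m)%nat -> sumL p (nth i asg nil) <= makespan n C.
Proof.
  intros Hg [Ha Hc] i Hi.
  assert (H := chain_lower b (rates i) lo p S C _ (Hg i Hi) 0 (Rle_refl 0) (Hc i Hi)).
  destruct (lastC_cases C 0 (nth i asg nil)) as [E|[j [Hj E]]]; rewrite E in H.
  - pose proof (mk_ge0 n C). lra.
  - assert (j < n)%nat. { eapply asg_in; eauto. eapply asg_in_nth; eauto. destruct Ha; lia. }
    pose proof (mk_ge n C j H0). lra.
Qed.
End Main.

Theorem mainTheorem2
  (m : nat) (e0 alpha : R)
  (A : nat -> (nat -> R) -> list (list nat)) :
  (1 <= m)%nat ->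
  0 < e0 <= 1 ->
  (* A is an alpha-approximation algorithm for P_m || C_max *)
  (forall (n : nat) (p : nat -> R),
     (forall j, (j < n)%nat -> 0 < p j) ->
     assignment m n (A n p) /\
     (forall S C, schedule true m n p (fun _ => classical_rate) (A n p) S C ->
      forall asg' S' C', schedule false m n p (fun _ => classical_rate) asg' S' C' ->
      makespan n C <= alpha * makespan n C')) ->
  (* then using its schedule is an alpha/e0-approximation for
     P_m, e_{i,k} >= e0 || C_max *)
  forall (n : nat) (p : nat -> R) (rates : nat -> R -> R),
    (forall j, (j < n)%nat -> 0 < p j) ->
    (forall i, (i < m)%nat -> sharing_profile e0 (rates i)) ->
    forall S C, schedule true m n p rates (A n p) S C ->
    forall asg' S' C', schedule false m n p rates asg' S' C' ->
    makespan n C <= alpha / e0 * makespan n C'.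
Proof.
  intros Hm He0 HA n p rates Hp Hr S C Hs asg' S' C' Hs'.
  destruct (HA n p Hp) as [Ha Happ].
  assert (Hg : forall i, (i < m)%nat -> good (rates i) e0) by (intros; apply sharing_good; auto).
  assert (Hg1 : forall i, (i < m)%nat -> good ((fun _ => classical_rate) i) 1) by (intros; apply classical_good).
  destruct (classical_exists m n p Hp _ Ha) as [S1 [C1 Hs1]].
  destruct (classical_exists m n p Hp asg' (proj1 Hs')) as [S2 [C2 Hs2]].
  assert (H1 : e0 * makespan n C <= makespan n C1).
  { eapply upper_mk; eauto. lra. apply mk_ge0. intros i Hi. eapply lower_mk; eauto. }
  assert (H2 : makespan n C1 <= alpha * makespan n C2).
  { apply (Happ S1 C1 Hs1 asg' S2 C2). destruct Hs2 as [X Y]. split; auto.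
    intros i Hi. apply chain_true_false; auto. }
  assert (H3 : 1 * makespan n C2 <= makespan n C').
  { eapply upper_mk with (rates := fun _ => classical_rate); eauto. lra. apply mk_ge0.
    intros i Hi. eapply lower_mk with (rates := rates); eauto. }
  pose proof (mk_ge0 n C2). pose proof (mk_ge0 n C). pose proof (mk_ge0 n C').
  assert (Hfin : e0 * makespan n C <= alpha * makespan n C').
  { destruct (Rle_lt_dec 0 alpha) as [Hal|Hal].
    - assert (alpha * makespan n C2 <= alpha * makespan n C') by (apply Rmult_le_compat_l; lra). lra.
    - destruct n as [|n'].
      + assert (makespan 0 C <= 0) by (apply mk_le; [lra| intros; lia]).
        assert (makespan 0 C' <= 0) by (apply mk_le; [lra| intros; lia]).
        nra.
      + exfalso. destruct (asg_find m (Datatypes.S n') (A (Datatypes.S n') p) 0 Ha ltac:(lia)) as [i [Hi Hin]].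
        assert (p 0%nat <= sumL p (nth i (A (Datatypes.S n') p) nil)).
        { apply sumL_ge; auto. intros x hx. apply Rlt_le, Hp. eapply asg_in; eauto.
          eapply asg_in_nth; eauto. destruct Ha; lia. }
        assert (sumL p (nth i (A (Datatypes.S n') p) nil) <= makespan (Datatypes.S n') C1) by (eapply lower_mk; eauto).
        assert (0 < p 0%nat) by (apply Hp; lia).
        nra. }
  replace (alpha / e0 * makespan n C') with ((alpha * makespan n C') / e0) by (field; lra).
  apply Rmult_le_reg_l with e0; [lra|]. field_simplify; lra.
Qed.
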